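(* Let $\alpha$ be an expanding algebraic number and $\mathcal{D}\subset\mathbb{Z}[\alpha]$ a standard digit set for $\alpha$. For each $x\in\mathbb{Z}[\alpha]$, $\mathcal{G}(x)=\bigcup_{y\in T_\alpha^{-1}(x)}\alpha^{-1}\cdot\mathcal{G}(y)$.
   Context: $\alpha$ is an algebraic number all of whose conjugates have modulus $>1$. $K=\mathbb{Q}(\alpha)$, $\alpha\mathcal{O}_K=\mathfrak{a}/\mathfrak{b}$ with coprime integral ideals; $S_\alpha$ = infinite primes together with primes dividing $\mathfrak{b}$; $\mathbb{K}_\alpha=\prod_{\mathfrak{p}\in S_\alpha}K_\mathfrak{p}$ (completions), $\Phi_\alpha$ the diagonal embedding, $\mathbb{Q}(\alpha)$ acting componentwise by multiplication. $\mathcal{D}$ standard: complete residue system of $\mathbb{Z}[\alpha]/\alpha\mathbb{Z}[\alpha]$. $\mathcal{F}=\{\sum_{k\ge1}\Phi_\alpha(d_k\alpha^{-k}):d_k\in\mathcal{D}\}$; $\mathcal{G}(x)=\{(z_\mathfrak{p})\in\mathcal{F}+\Phi_\alpha(x): z_\mathfrak{p}=0\ \forall\mathfrak{p}\mid\mathfrak{b}\}$. The map $T_\alpha:\mathbb{Z}[\alpha]\to\mathbb{Z}[\alpha]$ is $x\mapsto\alpha^{-1}(x-d)$ where $d$ is the unique element of $\mathcal{D}$ with $\alpha^{-1}(x-d)\in\mathbb{Z}[\alpha]$; $T_\alpha^{-1}(x)$ denotes the preimage set. *)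

(* Defs.v *)
From mathcomp Require Import all_boot all_order all_algebra all_fingroup all_field.
Set Implicit Arguments. Unset Strict Implicit. Unset Printing Implicit Defensive.
Import Order.TTheory GRing.Theory Num.Theory.
Local Open Scope ring_scope.

Section Defs.
Variable alpha : algC.

Definition expanding : Prop :=
  forall beta : algC, root (minCpoly alpha) beta -> 1 < `|beta|.

Definition inK (x : algC) : Prop :=
  exists p : {poly rat}, x = (map_poly ratr p).[alpha].
Definition inZalpha (x : algC) : Prop :=
  exists p : {poly int}, x = (map_poly (fun z : int => z%:~R) p).[alpha].
Definition inOK (x : algC) : Prop := inK x /\ x \in Aint.

Definition prime_ideal (P : algC -> Prop) : Prop :=
  (forall x, P x -> inOK x) /\ P 0 /\
  (forall x y, P x -> P y -> P (x + y)) /\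
  (forall r x, inOK r -> P x -> P (r * x)) /\
  ~ P 1 /\
  (forall x y, inOK x -> inOK y -> P (x * y) -> P x \/ P y) /\
  (exists x, P x /\ x <> 0).

Fixpoint ideal_pow (P : algC -> Prop) (n : nat) : algC -> Prop :=
  match n with
  | 0 => inOK
  | n'.+1 => fun x => exists l : seq (algC * algC),
       (forall ab, ab \in l -> P ab.1 /\ ideal_pow P n' ab.2) /\
       x = \sum_(ab <- l) ab.1 * ab.2
  end.

(* x in P^n O_{K,P}  (i.e. v_P(x) >= n), for x in K. *)
Definition vP_ge (P : algC -> Prop) (n : nat) (x : algC) : Prop :=
  exists s, [/\ inOK s, ~ P s & ideal_pow P n (s * x)].

(* P divides the denominator ideal b of alpha O_K = a/b (a, b coprime):
   equivalently v_P(alpha) < 0, i.e. alpha is not in the localisation O_{K,P}. *)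
Definition divides_denom (P : algC -> Prop) : Prop := ~ vP_ge P 0 alpha.

(* Places of K: an infinite place is given by a conjugate beta of alpha
   (the embedding alpha |-> beta), with beta, conj beta identified by
   requiring 0 <= Im beta; a finite place by a prime ideal. *)
Inductive place := Inf of algC | Fin of (algC -> Prop).

Definition in_S (v : place) : Prop :=
  match v with
  | Inf beta => root (minCpoly alpha) beta /\ 0 <= 'Im beta
  | Fin P => prime_ideal P /\ divides_denom P
  end.

(* "x is n-small at v": basic neighbourhoods of 0 in K for the topology of v. *)
Definition small (v : place) (n : nat) (x : algC) : Prop :=
  match v with
  | Inf beta => exists p : {poly rat},
      x = (map_poly ratr p).[alpha] /\ `|(map_poly ratr p).[beta]| < (n.+1%:R)^-1
  | Fin P => vP_ge P n x
  end.

(* The completion K_v is modelled by Cauchy sequences of elements of K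
   modulo null sequences. *)
Definition cauchy (v : place) (s : nat -> algC) : Prop :=
  (forall i, inK (s i)) /\
  forall n, exists N, forall i j, (N <= i)%N -> (N <= j)%N -> small v n (s i - s j).

Definition ceq (v : place) (s t : nat -> algC) : Prop :=
  forall n, exists N, forall i, (N <= i)%N -> small v n (s i - t i).

Definition conv_to (v : place) (u : nat -> algC) (z : nat -> algC) : Prop :=
  forall n, exists N, forall m, (N <= m)%N ->
    exists M, forall i, (M <= i)%N -> small v n (u m - z i).

(* Points of K_alpha = prod_{v in S_alpha} K_v. *)
Definition Kpoint := place -> nat -> algC.
Definition is_point (z : Kpoint) : Prop := forall v, in_S v -> cauchy v (z v).
Definition peq (z w : Kpoint) : Prop := forall v, in_S v -> ceq v (z v) (w v).
Definition pscale (c : algC) (z : Kpoint) : Kpoint := fun v k => c * z v k.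

Variable D : algC -> Prop.

Definition standard_digits : Prop :=
  (forall d, D d -> inZalpha d) /\
  (forall x, inZalpha x -> exists! d, D d /\
      exists y, inZalpha y /\ x - d = alpha * y).

(* T_alpha(y) = x  (as a relation; it is functional when D is standard). *)
Definition T_alpha (y x : algC) : Prop :=
  inZalpha y /\ exists d, [/\ D d, inZalpha (alpha^-1 * (y - d)) & x = alpha^-1 * (y - d)].

(* z in F + Phi(x):  z - Phi(x) = sum_{k>=1} Phi(d_k alpha^-k) in K_alpha. *)
Definition in_F_plus (x : algC) (z : Kpoint) : Prop :=
  exists d : nat -> algC, (forall k, D (d k)) /\
    forall v, in_S v ->
      conv_to v (fun m => x + \sum_(1 <= k < m.+1) d k * alpha ^- k) (z v).

Definition in_G (x : algC) (z : Kpoint) : Prop :=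
  in_F_plus x z /\ forall P, in_S (Fin P) -> ceq (Fin P) (z (Fin P)) (fun _ => 0).

End Defs.

(* Main.v *)
Require Import Defs.
From mathcomp Require Import all_boot all_order all_algebra all_fingroup all_field.
From Stdlib Require Import Classical IndefiniteDescription.
From mathcomp Require Import ring.
Import Order.TTheory GRing.Theory Num.Theory.
Local Open Scope ring_scope.
Set Implicit Arguments. Unset Strict Implicit. Unset Printing Implicit Defensive.

Section KO.
Variable alpha : algC.
Local Notation inK := (inK alpha).
Local Notation inOK := (inOK alpha).

Lemma inK_poly (p : {poly rat}) : inK ((map_poly ratr p).[alpha]).
Proof. by exists p. Qed.

Lemma inK0 : inK 0.
Proof. by exists 0; rewrite rmorph0 horner0. Qed.
Lemma inK_rat (c : rat) : inK (ratr c).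
Proof. by exists c%:P; rewrite map_polyC hornerC. Qed.
Lemma inK1 : inK 1.
Proof. by exists 1; rewrite rmorph1 hornerC. Qed.
Lemma inK_alpha : inK alpha.
Proof. by exists 'X; rewrite map_polyX hornerX. Qed.
Lemma inKD x y : inK x -> inK y -> inK (x + y).
Proof. by move=> [p ->] [q ->]; exists (p + q); rewrite rmorphD hornerD. Qed.
Lemma inKN x : inK x -> inK (- x).
Proof. by move=> [p ->]; exists (- p); rewrite rmorphN hornerN. Qed.
Lemma inKB x y : inK x -> inK y -> inK (x - y).
Proof. by move=> hx hy; apply: inKD => //; apply: inKN. Qed.
Lemma inKM x y : inK x -> inK y -> inK (x * y).
Proof. by move=> [p ->] [q ->]; exists (p * q); rewrite rmorphM hornerM. Qed.
Lemma inK_int (z : int) : inK z%:~R.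
Proof. by have := inK_rat z%:~R; rewrite rmorph_int. Qed.
Lemma inKX x n : inK x -> inK (x ^+ n).
Proof. by move=> hx; elim: n => [|n IH]; [rewrite expr0; apply: inK1 | rewrite exprS; apply: inKM]. Qed.
Lemma inK_sum I (r : seq I) (F : I -> algC) :
  (forall i, inK (F i)) -> inK (\sum_(i <- r) F i).
Proof. by move=> h; apply: big_ind => //; [apply: inK0 | apply: inKD]. Qed.
Lemma inK_prod I (r : seq I) (F : I -> algC) :
  (forall i, inK (F i)) -> inK (\prod_(i <- r) F i).
Proof. by move=> h; apply: big_ind => //; [apply: inK1 | apply: inKM]. Qed.

Lemma inOK0 : inOK 0. Proof. by split; [apply: inK0 | apply: rpred0]. Qed.
Lemma inOK1 : inOK 1. Proof. by split; [apply: inK1 | apply: rpred1]. Qed.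
Lemma inOK_int (z : int) : inOK z%:~R.
Proof. by split; [apply: inK_int | apply: Aint_int]. Qed.
Lemma inOKD x y : inOK x -> inOK y -> inOK (x + y).
Proof. by move=> [? ?] [? ?]; split; [apply: inKD | apply: rpredD]. Qed.
Lemma inOKN x : inOK x -> inOK (- x).
Proof. by move=> [? ?]; split; [apply: inKN | rewrite rpredN]. Qed.
Lemma inOKB x y : inOK x -> inOK y -> inOK (x - y).
Proof. by move=> hx hy; apply: inOKD => //; apply: inOKN. Qed.
Lemma inOKM x y : inOK x -> inOK y -> inOK (x * y).
Proof. by move=> [? ?] [? ?]; split; [apply: inKM | apply: rpredM]. Qed.
Lemma inOKX x n : inOK x -> inOK (x ^+ n).
Proof. by move=> hx; elim: n => [|n IH]; [rewrite expr0; apply: inOK1 | rewrite exprS; apply: inOKM]. Qed.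
Lemma inOK_sum I (r : seq I) (F : I -> algC) :
  (forall i, inOK (F i)) -> inOK (\sum_(i <- r) F i).
Proof. by move=> h; apply: big_ind => //; [apply: inOK0 | apply: inOKD]. Qed.
Lemma inOK_prod I (r : seq I) (F : I -> algC) :
  (forall i, inOK (F i)) -> inOK (\prod_(i <- r) F i).
Proof. by move=> h; apply: big_ind => //; [apply: inOK1 | apply: inOKM]. Qed.

End KO.

Definition SP (A B : algC -> Prop) (y : algC) : Prop :=
  exists l : seq (algC * algC),
    (forall ab, ab \in l -> A ab.1 /\ B ab.2) /\ y = \sum_(ab <- l) ab.1 * ab.2.

Lemma SP_ind (A B C : algC -> Prop) y :
  C 0 -> (forall x y, C x -> C y -> C (x + y)) ->
  (forall a b, A a -> B b -> C (a * b)) -> SP A B y -> C y.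
Proof.
move=> C0 CD CM [l [hl ->]]; rewrite big_seq.
apply: big_ind => // ab /hl [h1 h2]; exact: CM.
Qed.

Lemma SP0 A B : SP A B 0.
Proof. by exists [::]; rewrite big_nil. Qed.
Lemma SPD A B x y : SP A B x -> SP A B y -> SP A B (x + y).
Proof.
move=> [l1 [h1 ->]] [l2 [h2 ->]]; exists (l1 ++ l2); split; last by rewrite big_cat.
by move=> ab; rewrite mem_cat => /orP [/h1|/h2].
Qed.
Lemma SP1 (A B : algC -> Prop) a b : A a -> B b -> SP A B (a * b).
Proof.
move=> ha hb; exists [:: (a, b)]; split; last by rewrite big_seq1.
by move=> ab; rewrite inE => /eqP ->.
Qed.
Lemma SP_mono (A B A' B' : algC -> Prop) y :
  (forall x, A x -> A' x) -> (forall x, B x -> B' x) -> SP A B y -> SP A' B' y.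
Proof.
move=> hA hB; apply: SP_ind; [exact: SP0 | exact: SPD|].
by move=> a b /hA ? /hB ?; apply: SP1.
Qed.

Section Ideal.
Variable alpha : algC.
Local Notation inK := (inK alpha).
Local Notation inOK := (inOK alpha).
Variable P : algC -> Prop.
Hypothesis hP : prime_ideal alpha P.
Local Notation I := (ideal_pow alpha P).

Lemma P_OK x : P x -> inOK x. Proof. by case: hP => h _; apply: h. Qed.
Lemma P_0 : P 0. Proof. by case: hP => _ [h _]. Qed.
Lemma P_D x y : P x -> P y -> P (x + y). Proof. by case: hP => _ [_ [h _]]; apply: h. Qed.
Lemma P_M r x : inOK r -> P x -> P (r * x). Proof. by case: hP => _ [_ [_ [h _]]]; apply: h. Qed.
Lemma P_1 : ~ P 1. Proof. by case: hP => _ [_ [_ [_ [h _]]]]. Qed.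
Lemma P_prime x y : inOK x -> inOK y -> P (x * y) -> P x \/ P y.
Proof. by case: hP => _ [_ [_ [_ [_ [h _]]]]]; apply: h. Qed.
Lemma P_N x : P x -> P (- x).
Proof. by move=> h; rewrite -mulN1r; apply: P_M => //; apply/inOKN/inOK1. Qed.
Lemma P_B x y : P x -> P y -> P (x - y).
Proof. by move=> hx hy; apply: P_D => //; apply: P_N. Qed.
Lemma P_Mr r x : inOK r -> P x -> P (x * r). Proof. by rewrite mulrC; apply: P_M. Qed.
Lemma P_sum J (r : seq J) (F : J -> algC) :
  (forall i, P (F i)) -> P (\sum_(i <- r) F i).
Proof. by move=> h; apply: big_ind => //; [apply: P_0 | apply: P_D]. Qed.
Lemma notP_M x y : inOK x -> inOK y -> ~ P x -> ~ P y -> ~ P (x * y).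
Proof. by move=> hx hy nx ny /(P_prime hx hy) []. Qed.

Lemma I_OK n x : I n x -> inOK x.
Proof.
elim: n x => [//|n IH] x; apply: SP_ind; [exact: inOK0 | exact: inOKD |].
by move=> a b /P_OK ha /IH hb; apply: inOKM.
Qed.
Lemma I_0 n : I n 0.
Proof. by case: n => [|n]; [apply: inOK0 | exact: (@SP0 P (I n))]. Qed.
Lemma I_D n x y : I n x -> I n y -> I n (x + y).
Proof. by case: n => [|n]; [apply: inOKD | exact: (@SPD P (I n))]. Qed.
Lemma I_M n r x : inOK r -> I n x -> I n (r * x).
Proof.
case: n => [|n] hr; first exact: inOKM.
apply: (@SP_ind P (I n) (fun y => I n.+1 (r * y))).
- by rewrite mulr0; exact: (@SP0 P (I n)).
- by move=> ? ? ? ?; rewrite mulrDr; exact: (@SPD P (I n)).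
by move=> a b ha hb; rewrite mulrA; apply: (@SP1 P (I n)) => //; apply: P_M.
Qed.
Lemma I_Mr n r x : inOK r -> I n x -> I n (x * r).
Proof. by rewrite mulrC; apply: I_M. Qed.
Lemma I_N n x : I n x -> I n (- x).
Proof. by move=> h; rewrite -mulN1r; apply: I_M => //; apply/inOKN/inOK1. Qed.
Lemma I_sum n J (r : seq J) (F : J -> algC) :
  (forall i, I n (F i)) -> I n (\sum_(i <- r) F i).
Proof. by move=> h; apply: big_ind => //; [apply: I_0 | apply: I_D]. Qed.
Lemma I_S n x : I n.+1 x -> I n x.
Proof.
elim: n x => [|n IH] x.
  apply: (@SP_ind P (I 0) inOK); [exact: inOK0 | exact: inOKD |].
  by move=> a b /P_OK ha hb; apply: inOKM.
exact: (@SP_mono P (I n.+1) P (I n) x).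
Qed.
Lemma I_le m n x : (m <= n)%N -> I n x -> I m x.
Proof.
move=> /subnK <-; elim: (n - m)%N x => [|k IH] x; first by rewrite add0n.
by rewrite addSn => /I_S /IH.
Qed.
Lemma P_I1 x : P x -> I 1 x.
Proof. by move=> h; rewrite -[x]mulr1; apply: SP1 => //; apply: inOK1. Qed.

Lemma I_split a b y : I (a + b) y -> SP (I a) (I b) y.
Proof.
elim: a y => [|a IH] y.
  by rewrite add0n => h; rewrite -[y]mul1r; apply: SP1 => //; apply: inOK1.
rewrite addSn; apply: SP_ind; [exact: SP0 | exact: SPD |].
move=> c q hc /IH; apply: (@SP_ind _ _ (fun q => SP (I a.+1) (I b) (c * q))).
- by rewrite mulr0; apply: SP0.
- by move=> ? ? ? ?; rewrite mulrDr; apply: SPD.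
- by move=> y' z hy hz; rewrite mulrA; apply: SP1 => //; apply: SP1.
Qed.

Local Notation vP := (vP_ge alpha P).

Lemma vP0 n : vP n 0.
Proof. by exists 1; split; [apply: inOK1 | apply: P_1 | rewrite mulr0; apply: I_0]. Qed.
Lemma vPD n x y : vP n x -> vP n y -> vP n (x + y).
Proof.
move=> [s [hs ns hx]] [t [ht nt hy]]; exists (s * t); split.
- exact: inOKM.
- exact: notP_M.
have -> : s * t * (x + y) = t * (s * x) + s * (t * y) by ring.
by apply: I_D; apply: I_M.
Qed.
Lemma vPN n x : vP n x -> vP n (- x).
Proof. by move=> [s [hs ns hx]]; exists s; split => //; rewrite mulrN; apply: I_N. Qed.
Lemma vP_le m n x : (m <= n)%N -> vP n x -> vP m x.
Proof. by move=> hmn [s [hs ns hx]]; exists s; split => //; apply: I_le hx. Qed.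

End Ideal.

Lemma fchoice (T : Type) (Q : nat -> T -> Prop) :
  (forall i, exists t, Q i t) -> exists f : nat -> T, forall i, Q i (f i).
Proof.
move=> h; exists (fun i => proj1_sig (constructive_indefinite_description _ (h i))).
by move=> i; exact: (proj2_sig (constructive_indefinite_description _ (h i))).
Qed.

Lemma ochoice n (T : Type) (Q : 'I_n -> T -> Prop) :
  (forall i, exists t, Q i t) -> exists f : 'I_n -> T, forall i, Q i (f i).
Proof.
move=> h; exists (fun i => proj1_sig (constructive_indefinite_description _ (h i))).
by move=> i; exact: (proj2_sig (constructive_indefinite_description _ (h i))).
Qed.

Section Dim.
Variable alpha : algC.
Local Notation inK := (inK alpha).
Local Notation pQtoC := (map_poly (ratr : rat -> algC)).

Lemma inK_bounded : exists d, forall x, inK x ->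
  exists q : {poly rat}, (size q < d)%N /\ x = (pQtoC q).[alpha].
Proof.
have [m [Dm mon_m] dv] := minCpolyP alpha.
have m0 : m != 0 by apply: monic_neq0.
exists (size m) => x [q ->]; exists (q %% m); split; first by rewrite ltn_modp.
have h : (pQtoC m).[alpha] = 0 by apply/rootP; rewrite dv dvdpp.
by rewrite {1}(divp_eq q m) rmorphD rmorphM hornerD hornerM h mulr0 add0r.
Qed.

Lemma K_dep_rat : exists d, forall L : seq algC, (forall i, inK L`_i) ->
  (d < size L)%N -> exists v : 'I_(size L) -> rat,
  \sum_(i < size L) ratr (v i) * L`_i = 0 /\ exists i, v i != 0.
Proof.
have [d hd] := inK_bounded; exists d => L hL hsz.
have [Q HQ] := fchoice (fun i => hd _ (hL i)).
pose A : 'M[rat]_(size L, d) := \matrix_(i, j) (Q i)`_j.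
have kA : kermx A != 0.
  rewrite -mxrank_eq0 mxrank_ker subn_eq0 -ltnNge.
  exact: (leq_ltn_trans (rank_leq_col A) hsz).
pose v := nz_row (kermx A).
have v0 : v != 0 by rewrite nz_row_eq0.
have vA : v *m A = 0 by apply/sub_kermxP; apply: (submx_trans (nz_row_sub _)); apply: submx_refl.
exists (fun i => v 0 i); split.
  have -> : \sum_(i < size L) ratr (v 0 i) * L`_i =
            (pQtoC (\sum_(i < size L) v 0 i *: Q i)).[alpha].
    rewrite rmorph_sum horner_sum; apply: eq_bigr => i _.
    by rewrite /= map_polyZ hornerZ; case: (HQ i) => _ <-.
  suff -> : \sum_(i < size L) v 0 i *: Q i = 0 by rewrite rmorph0 horner0.
  apply/polyP => j; rewrite coef_sum coef0.
  case: (ltnP j d) => hj.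
    have := congr1 (fun M : 'M_(1, d) => M 0 (Ordinal hj)) vA.
    rewrite /= !mxE => h; apply: (etrans _ h); apply: eq_bigr => i _; by rewrite coefZ mxE.
  apply: big1 => i _; rewrite coefZ nth_default ?mulr0 //.
  by case: (HQ i) => hs _; apply: leq_trans (ltnW hs) hj.
apply: NNPP => hn; move/eqP: v0; apply; apply/matrixP => a b.
rewrite (ord1 a) mxE; case: (eqVneq (v 0 b) 0) => // h.
by exfalso; apply: hn; exists b.
Qed.

End Dim.

Section Dim2.
Variable alpha : algC.
Local Notation inK := (inK alpha).

Lemma K_dep_int : exists d, forall L : seq algC, (forall i, inK L`_i) ->
  (d < size L)%N -> exists c : 'I_(size L) -> int,
  \sum_(i < size L) (c i)%:~R * L`_i = 0 /\ exists i, c i != 0.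
Proof.
have [d hd] := K_dep_rat alpha; exists d => L hL hsz.
have [v [hv [i0 hi0]]] := hd L hL hsz.
pose N : int := \prod_(i < size L) denq (v i).
have N0 : N != 0 by apply/prodf_neq0 => i _; apply: denq_neq0.
have hint : forall i, exists z : int, v i * N%:~R = z%:~R.
  move=> i; apply/intrP.
  rewrite /N (bigD1 i) //= rmorphM mulrA -numqE.
  by rewrite rpredM ?intr_int.
have [c hc] := ochoice hint.
exists c; split.
  have -> : \sum_(i < size L) (c i)%:~R * L`_i =
            (N%:~R : algC) * \sum_(i < size L) ratr (v i) * L`_i.
    rewrite mulr_sumr; apply: eq_bigr => i _.
    by rewrite -(rmorph_int (ratr : {rmorphism rat -> algC})) -hc rmorphM rmorph_int mulrA (mulrC N%:~R).
  by rewrite hv mulr0.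
exists i0; apply/eqP => h; move: (hc i0); rewrite h mulr0z => /eqP.
by rewrite mulf_eq0 intr_eq0 (negbTE hi0) (negbTE N0).
Qed.

Lemma dep_red (p : nat) n (L : seq algC) : prime p ->
  forall c : 'I_n -> int, \sum_(i < n) (c i)%:~R * L`_i = 0 -> (exists i, c i != 0) ->
  exists c' : 'I_n -> int, \sum_(i < n) (c' i)%:~R * L`_i = 0 /\
    exists i, ~~ (p%:Z %| c' i)%Z.
Proof.
move=> pp c; move: {2}(\sum_i `|c i|)%N (leqnn (\sum_i `|c i|)%N) => k.
elim: k c => [|k IH] c hk hs [i0 hi0].
  exfalso; move: hk; rewrite leqn0 sum_nat_eq0 => /forallP /(_ i0).
  by rewrite absz_eq0 (negbTE hi0).
case: (classic (exists i, ~~ (p%:Z %| c i)%Z)) => [h|h]; first by exists c; split.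
have hd : forall i, (p%:Z %| c i)%Z.
  by move=> i; apply/negPn/negP => hn; apply: h; exists i.
pose c' i := (c i %/ p%:Z)%Z.
have hcc i : c i = c' i * p%:Z by rewrite divzK.
have p0 : (0 < p)%N by apply: prime_gt0.
have p1 : (1 < p)%N by apply: prime_gt1.
apply: (IH c').
- have hsum : (\sum_i `|c i| = (\sum_i `|c' i|) * p)%N.
    rewrite big_distrl /=; apply: eq_bigr => i _; by rewrite {1}hcc abszM.
  have : (0 < \sum_i `|c' i|)%N.
    rewrite lt0n sum_nat_eq0; apply/negP => /forallP /(_ i0).
    by rewrite absz_eq0; move: hi0; rewrite hcc => /[swap] /eqP ->; rewrite mul0r eqxx.
  move=> hpos; rewrite -ltnS; apply: leq_trans hk; rewrite hsum.
  by rewrite -{1}(muln1 (\sum_i `|c' i|)%N) ltn_pmul2l.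
- have : (p%:R : algC) * \sum_(i < n) (c' i)%:~R * L`_i = 0.
    apply: (etrans _ hs); rewrite mulr_sumr; apply: eq_bigr => i _.
    by rewrite hcc intrM mulrA (mulrC p%:R) -[p%:R]/((p%:Z)%:~R).
  by move/eqP; rewrite mulf_eq0 pnatr_eq0 eqn0Ngt p0 /= => /eqP.
- by exists i0; move: hi0; rewrite hcc; apply: contraNneq => ->; rewrite mul0r.
Qed.

Lemma K_dep : exists d, forall (p : nat), prime p -> forall L : seq algC,
  (forall i, inK L`_i) -> (d < size L)%N -> exists c : 'I_(size L) -> int,
  \sum_(i < size L) (c i)%:~R * L`_i = 0 /\ exists i, ~~ (p%:Z %| c i)%Z.
Proof.
have [d hd] := K_dep_int; exists d => p pp L hL hsz.
have [c [hs hnz]] := hd L hL hsz.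
exact: dep_red pp c hs hnz.
Qed.

End Dim2.

Section Indep.
Variable alpha : algC.
Local Notation inK := (inK alpha).
Local Notation inOK := (inOK alpha).
Variable p : nat.
Hypothesis pp : prime p.

Definition pO (y : algC) := exists g, inOK g /\ y = p%:R * g.

Lemma pO0 : pO 0. Proof. by exists 0; split; [apply: inOK0 | rewrite mulr0]. Qed.
Lemma pOD x y : pO x -> pO y -> pO (x + y).
Proof. by move=> [g [hg ->]] [h [hh ->]]; exists (g + h); split; [apply: inOKD | rewrite mulrDr]. Qed.
Lemma pOM r y : inOK r -> pO y -> pO (r * y).
Proof. by move=> hr [g [hg ->]]; exists (r * g); split; [apply: inOKM | rewrite mulrCA]. Qed.
Lemma pON y : pO y -> pO (- y).
Proof. by move=> h; rewrite -mulN1r; apply: pOM => //; apply/inOKN/inOK1. Qed.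
Lemma pOB x y : pO x -> pO y -> pO (x - y).
Proof. by move=> hx hy; apply: pOD => //; apply: pON. Qed.
Lemma pO_p g : inOK g -> pO (p%:R * g).
Proof. by move=> hg; exists g. Qed.
Lemma pO_sum J (r : seq J) (F : J -> algC) :
  (forall i, pO (F i)) -> pO (\sum_(i <- r) F i).
Proof. by move=> h; apply: big_ind => //; [apply: pO0 | apply: pOD]. Qed.
Lemma pO_OK y : pO y -> inOK y.
Proof. by move=> [g [hg ->]]; apply: inOKM => //; rewrite -[p%:R]/((p%:Z)%:~R); apply: inOK_int. Qed.

Definition lcomb (L : seq algC) (c : 'I_(size L) -> int) :=
  \sum_(i < size L) (c i)%:~R * L`_i.
Definition pspan (L : seq algC) (y : algC) :=
  exists c : 'I_(size L) -> int, pO (y - lcomb c).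
Definition Indep (L : seq algC) :=
  forall c : 'I_(size L) -> int, pO (lcomb c) -> forall i, (p%:Z %| c i)%Z.

Lemma Indep_nil : Indep [::].
Proof. by move=> c _ [i hi]. Qed.

Lemma Indep_cons L x : Indep L -> inOK x -> ~ pspan L x -> Indep (x :: L).
Proof.
move=> hL hx hsp c hc.
pose c' (j : 'I_(size L)) := c (lift ord0 j).
have hsum : lcomb c = (c ord0)%:~R * x + lcomb c'.
  by rewrite /lcomb big_ord_recl /=.
have hp0 : (p%:Z %| c ord0)%Z.
  apply/negPn/negP => hnd.
  have [u [v huv]] := Bezoutz (c ord0) p%:Z.
  have g1 : gcdz (c ord0) p%:Z = 1.
    rewrite /gcdz gcdnC; apply/eqP; change (coprime p `|c ord0|).
    by rewrite prime_coprime //; exact: hnd.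
  rewrite g1 in huv.
  apply: hsp; exists (fun j => - u * c' j).
  have -> : x - lcomb (fun j => - u * c' j) =
            u%:~R * lcomb c + p%:R * (v%:~R * x).
    have hx1 : x = (u%:~R * (c ord0)%:~R + v%:~R * p%:R) * x.
      by rewrite -[p%:R]/((p%:Z)%:~R) -!intrM -intrD huv mul1r.
    have e : \sum_(i < size L) ((- u * c' i)%:~R * L`_i) =
             - u%:~R * \sum_(i < size L) ((c' i)%:~R * L`_i).
      by rewrite mulr_sumr; apply: eq_bigr => i _; rewrite intrM intrN mulrA.
    rewrite hsum /lcomb e {1}hx1; ring.
  apply: pOD; first by apply: pOM => //; apply: inOK_int.
  by apply: pO_p; apply: inOKM => //; apply: inOK_int.
have hc' : pO (lcomb c').
  have -> : lcomb c' = lcomb c - (c ord0)%:~R * x by rewrite hsum; ring.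
  apply: pOB => //; move: hp0 => /dvdzP [w ->].
  rewrite intrM -[(p%:Z)%:~R]/(p%:R : algC) (mulrC w%:~R) -mulrA.
  by apply: pO_p; apply: inOKM => //; apply: inOK_int.
move=> i; case: (unliftP ord0 i) => [j ->|->] //.
exact: hL hc' j.
Qed.

Lemma nth_inK (L : seq algC) : (forall x, x \in L -> inOK x) -> forall i, inK L`_i.
Proof.
move=> h i; case: (ltnP i (size L)) => hi.
  by case: (h _ (mem_nth 0 hi)).
by rewrite nth_default //; apply: inK0.
Qed.

End Indep.

Section Gen.
Variable alpha : algC.
Local Notation inK := (inK alpha).
Local Notation inOK := (inOK alpha).
Variable p : nat.
Hypothesis pp : prime p.
Local Notation pO := (pO alpha p).
Local Notation pspan := (pspan alpha p).
Local Notation Indep := (Indep alpha p).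

Lemma Indep_bound : exists d, forall L, (forall x, x \in L -> inOK x) ->
  Indep L -> (size L <= d)%N.
Proof.
have [d hd] := K_dep alpha; exists d => L hL hI.
rewrite leqNgt; apply/negP => hs.
have [c [hc [i hi]]] := hd p pp L (nth_inK hL) hs.
by move: hi; rewrite (hI c) //; rewrite /lcomb hc; apply: pO0.
Qed.

Lemma gen_lemma (J : algC -> Prop) : (forall y, J y -> inOK y) ->
  exists L, (forall x, x \in L -> J x) /\ forall y, J y -> pspan L y.
Proof.
move=> hJ; apply: NNPP => hn.
have step : forall L, (forall x, x \in L -> J x) -> exists y, J y /\ ~ pspan L y.
  move=> L hL; apply: NNPP => h2; apply: hn; exists L; split => // y hy.
  by apply: NNPP => h3; apply: h2; exists y.
have [d hd] := Indep_bound.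
have : forall r, exists L, [/\ size L = r, (forall x, x \in L -> J x) & Indep L].
  elim=> [|r [L [hs hL hI]]]; first by exists [::]; split => //; apply: Indep_nil.
  have [y [hy hsp]] := step L hL.
  exists (y :: L); split; first by rewrite /= hs.
    by move=> x; rewrite inE => /orP [/eqP ->|/hL].
  by apply: Indep_cons => //; apply: hJ.
move=> /(_ d.+1) [L [hs hL hI]].
have := hd L (fun x hx => hJ x (hL x hx)) hI.
by rewrite hs ltnn.
Qed.

End Gen.

Section Chain.
Variable alpha : algC.
Local Notation inK := (inK alpha).
Local Notation inOK := (inOK alpha).
Variable P : algC -> Prop.
Hypothesis hP : prime_ideal alpha P.
Local Notation I := (ideal_pow alpha P).
Variable p : nat.
Hypothesis pp : prime p.
Local Notation pO := (pO alpha p).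
Local Notation pspan := (pspan alpha p).
Local Notation Indep := (Indep alpha p).
Local Notation lcomb := (lcomb).

Definition Jk k y := exists a g, [/\ I k a, inOK g & y = a + p%:R * g].

Lemma Jk_OK k y : Jk k y -> inOK y.
Proof.
move=> [a [g [ha hg ->]]]; apply: inOKD; first exact: I_OK ha.
by apply: pO_OK; apply: pO_p.
Qed.
Lemma Jk_I k a : I k a -> Jk k a.
Proof. by move=> h; exists a, 0; split => //; [apply: inOK0 | rewrite mulr0 addr0]. Qed.
Lemma Jk_pO k y : pO y -> Jk k y.
Proof. by move=> [g [hg ->]]; exists 0, g; split => //; [apply: I_0 | rewrite add0r]. Qed.
Lemma JkD k x y : Jk k x -> Jk k y -> Jk k (x + y).
Proof.
move=> [a [g [ha hg ->]]] [b [h [hb hh ->]]]; exists (a + b), (g + h); split.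
- exact: I_D.
- exact: inOKD.
- by ring.
Qed.
Lemma JkM k r y : inOK r -> Jk k y -> Jk k (r * y).
Proof.
move=> hr [a [g [ha hg ->]]]; exists (r * a), (r * g); split.
- exact: I_M.
- exact: inOKM.
- by ring.
Qed.
Lemma Jk_le k j y : (k <= j)%N -> Jk j y -> Jk k y.
Proof. by move=> hkj [a [g [ha hg ->]]]; exists a, g; split => //; apply: I_le ha. Qed.
Lemma Jk_lcomb k L (c : 'I_(size L) -> int) :
  (forall x, x \in L -> Jk k x) -> Jk k (lcomb c).
Proof.
move=> hL; rewrite /lcomb; apply: big_ind.
- by apply: Jk_I; apply: I_0.
- exact: JkD.
move=> i _; apply: JkM; first exact: inOK_int.
by apply: hL; apply: mem_nth.
Qed.
Lemma Jk_span k L y : (forall x, x \in L -> Jk k x) -> pspan L y -> Jk k y.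
Proof.
move=> hL [c hc]; have -> : y = (y - lcomb c) + lcomb c by ring.
by apply: JkD; [apply: Jk_pO | apply: Jk_lcomb].
Qed.

Lemma chain : exists k, forall y, Jk k y -> Jk k.+1 y.
Proof.
apply: NNPP => hn.
have step : forall k, exists y, Jk k y /\ ~ Jk k.+1 y.
  move=> k; apply: NNPP => h2; apply: hn; exists k => y hy.
  by apply: NNPP => h3; apply: h2; exists y.
have [d hd] := Indep_bound alpha pp.
have : forall r k, exists L, [/\ size L = r, (forall x, x \in L -> Jk k x) & Indep L].
  elim=> [|r IH] k; first by exists [::]; split => //; apply: Indep_nil.
  have [L [hs hL hI]] := IH k.+1.
  have [y [hy hny]] := step k.
  exists (y :: L); split; first by rewrite /= hs.
    move=> x; rewrite inE => /orP [/eqP ->|/hL] //.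
    by apply: Jk_le; apply: leqnSn.
  apply: Indep_cons => //; first exact: Jk_OK hy.
  by move=> hsp; apply: hny; apply: Jk_span hsp.
move=> /(_ d.+1 0%N) [L [hs hL hI]].
have := hd L (fun x hx => Jk_OK (hL x hx)) hI.
by rewrite hs ltnn.
Qed.

End Chain.

Section Det.
Variable alpha : algC.
Local Notation inOK := (inOK alpha).

Lemma sign_OK (b : bool) : inOK ((-1) ^+ b).
Proof. by apply: inOKX; apply/inOKN/inOK1. Qed.

Lemma det_OK n (M : 'M[algC]_n) : (forall i j, inOK (M i j)) -> inOK (\det M).
Proof.
move=> h; rewrite /determinant; apply: inOK_sum => s; apply: inOKM.
  exact: sign_OK.
by apply: inOK_prod.
Qed.

Variable P : algC -> Prop.
Hypothesis hP : prime_ideal alpha P.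

Lemma det_1P n (M : 'M[algC]_n) : (forall i j, inOK (M i j)) ->
  (forall i j, i != j -> P (M i j)) -> (forall i, P (M i i - 1)) -> P (\det M - 1).
Proof.
move=> hO hoff hdiag; rewrite /determinant (bigD1 (1%g : 'S_n)) //= odd_perm1 expr0 mul1r.
rewrite addrAC.
apply: (P_D hP) => //.
  have : inOK (\prod_i M i ((1%g : 'S_n) i)) /\ P (\prod_i M i ((1%g : 'S_n) i) - 1).
    apply: (big_ind (fun y => inOK y /\ P (y - 1))).
    - by split; [apply: inOK1 | rewrite subrr; apply: (P_0 hP)].
    - move=> x y [hx hpx] [hy hpy]; split; first exact: inOKM.
      have -> : x * y - 1 = x * (y - 1) + (x - 1) by ring.
      by apply: (P_D hP) => //; apply: (P_M hP).
    - by move=> i _; rewrite perm1; split => //; apply: hdiag.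
  by case.
apply: big_ind => //; [exact: P_0 hP | exact: P_D hP |].
move=> s hs.
have [i hi] : exists i, s i != i.
  apply: NNPP => hn; move/negP: hs; apply; apply/eqP/permP => i.
  rewrite perm1; apply/eqP; apply: NNPP => h; apply: hn; exists i; exact/negP.
rewrite (bigD1 i) //= mulrCA mulrC; apply: (P_M hP) => //.
  apply: inOKM; first exact: sign_OK.
  by apply: big_ind => //; [apply: inOK1 | apply: inOKM].
by apply: hoff; rewrite eq_sym.
Qed.

End Det.

Section Nak.
Variable alpha : algC.
Local Notation inOK := (inOK alpha).
Variable P : algC -> Prop.
Hypothesis hP : prime_ideal alpha P.
Local Notation I := (ideal_pow alpha P).
Variable p : nat.
Hypothesis pp : prime p.
Local Notation pO := (pO alpha p).
Local Notation Jk := (Jk alpha P p).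

Lemma prime_key : exists k t, [/\ inOK t, ~ P t &
  forall y, I k y -> exists g, inOK g /\ t * y = p%:R * g].
Proof.
have [k hk] := chain hP pp.
have [L [hL hsp]] := gen_lemma pp (@Jk_OK alpha P hP p k).
have hA : forall i : 'I_(size L), exists A : 'I_(size L) -> algC,
    (forall j, P (A j)) /\ pO (L`_i - \sum_j A j * L`_j).
  move=> i.
  have : Jk k.+1 L`_i by exact: hk _ (hL _ (mem_nth 0 (ltn_ord i))).
  move=> [a [g [ha hg ->]]].
  suff [A [hA hpa]] : exists A : 'I_(size L) -> algC,
      (forall j, P (A j)) /\ pO (a - \sum_j A j * L`_j).
    exists A; split => //.
    have -> : a + p%:R * g - \sum_j A j * L`_j = (a - \sum_j A j * L`_j) + p%:R * g by ring.
    by apply: pOD => //; apply: pO_p.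
  move: ha; apply: (@SP_ind P (I k) (fun a => exists A : 'I_(size L) -> algC,
      (forall j, P (A j)) /\ pO (a - \sum_j A j * L`_j))).
  - exists (fun _ => 0); split => [j|]; first exact: P_0 hP.
    by rewrite big1 ?subrr //; [apply: pO0 | move=> j _; rewrite mul0r].
  - move=> x y [A [hA hx]] [B [hB hy]]; exists (fun j => A j + B j); split.
      by move=> j; apply: (P_D hP).
    have -> : x + y - \sum_j (A j + B j) * L`_j =
              (x - \sum_j A j * L`_j) + (y - \sum_j B j * L`_j).
      have -> : \sum_j (A j + B j) * L`_j = \sum_j A j * L`_j + \sum_j B j * L`_j.
        by rewrite -big_split; apply: eq_bigr => j _; rewrite mulrDl.
      by ring.
    exact: pOD.
  - move=> a' b ha' hb.
    have [c hc] : pspan alpha p L b by apply: hsp; apply: Jk_I.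
    exists (fun j => a' * (c j)%:~R); split.
      by move=> j; apply: (P_Mr hP); [apply: inOK_int|].
    have -> : a' * b - \sum_j a' * (c j)%:~R * L`_j = a' * (b - lcomb c).
      by rewrite /lcomb mulrBr mulr_sumr; congr (_ - _); apply: eq_bigr => j _; rewrite mulrA.
    by apply: pOM => //; apply: (P_OK hP).
have [Am hAm] := ochoice hA.
pose n := size L.
pose M : 'M[algC]_(size L) := \matrix_(i, j) ((i == j)%:R - Am i j).
have MOK : forall i j, inOK (M i j).
  move=> i j; rewrite mxE; apply: inOKB.
    by case: (i == j); [apply: inOK1 | apply: inOK0].
  by apply: (P_OK hP); case: (hAm i) => h _; apply: h.
pose t := \det M.
have tOK : inOK t by apply: det_OK.
have t1 : P (t - 1).
  apply: (det_1P hP) => // [i j hij|i].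
    rewrite mxE (negbTE hij) sub0r; apply: (P_N hP).
    by case: (hAm i) => h _; apply: h.
  rewrite mxE eqxx; have -> : 1 - Am i i - 1 = - Am i i by ring.
  by apply: (P_N hP); case: (hAm i) => h _; apply: h.
have tP : ~ P t.
  move=> h; apply: (P_1 hP); have -> : 1 = t - (t - 1) by ring.
  exact: (P_B hP).
have tL : forall i : 'I_(size L), pO (t * L`_i).
  move=> i.
  pose E : 'cV[algC]_(size L) := \col_j L`_j.
  have ME : forall j, (M *m E) j 0 = L`_j - \sum_l Am j l * L`_l.
    move=> j; rewrite mxE.
    have -> : \sum_l M j l * E l 0 = \sum_l ((j == l)%:R * L`_l) - \sum_l Am j l * L`_l.
      rewrite -sumrB; apply: eq_bigr => l _; rewrite !mxE; ring.
    congr (_ - _); rewrite (bigD1 j) //= eqxx mul1r big1 ?addr0 //.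
    by move=> l hl; rewrite eq_sym (negbTE hl) mul0r.
  have : (\adj M *m (M *m E)) i 0 = t * L`_i.
    by rewrite mulmxA mul_adj_mx mul_scalar_mx !mxE.
  move=> <-; rewrite mxE; apply: pO_sum => j; apply: pOM.
    rewrite mxE /cofactor; apply: inOKM; first by apply: inOKX; apply/inOKN/inOK1.
    by apply: det_OK => a b; rewrite !mxE; move: (MOK (lift j a) (lift i b)); rewrite mxE.
  by rewrite ME; case: (hAm j).
exists k, t; split => // y hy.
have [c hc] : pspan alpha p L y by apply: hsp; apply: Jk_I.
have : pO (t * y).
  have -> : t * y = t * (y - lcomb c) + \sum_i (c i)%:~R * (t * L`_i).
    have -> : \sum_i (c i)%:~R * (t * L`_i) = t * lcomb c.
      by rewrite /lcomb mulr_sumr; apply: eq_bigr => i _; ring.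
    by ring.
  apply: pOD; first by apply: pOM.
  by apply: pO_sum => i; apply: pOM; [apply: inOK_int | apply: tL].
by move=> [g [hg ->]]; exists g.
Qed.

End Nak.

Section Key.
Variable alpha : algC.
Local Notation inOK := (inOK alpha).
Variable P : algC -> Prop.
Hypothesis hP : prime_ideal alpha P.
Local Notation I := (ideal_pow alpha P).

Lemma int_key (M : nat) : (0 < M)%N -> exists k t, [/\ inOK t, ~ P t &
  forall y, I k y -> exists g, inOK g /\ t * y = M%:R * g].
Proof.
elim/ltn_ind: M => M IH M0.
case: (ltnP 1 M) => hM; last first.
  have -> : M = 1%N by apply/eqP; rewrite eqn_leq hM M0.
  exists 0%N, 1; split; [exact: inOK1 | exact: (P_1 hP) |].
  by move=> y hy; exists y; split => //; rewrite !mul1r.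
have pp := pdiv_prime hM.
set p := pdiv M in pp.
have p1 : (1 < p)%N by apply: prime_gt1.
have hMp : M = (p * (M %/ p))%N by rewrite mulnC divnK // pdiv_dvd.
have [k1 [t1 [h1 n1 H1]]] := prime_key hP pp.
have [|k2 [t2 [h2 n2 H2]]] := IH (M %/ p)%N (ltn_Pdiv p1 M0).
  by rewrite divn_gt0 ?prime_gt0 // dvdn_leq // pdiv_dvd.
exists (k1 + k2)%N, (t1 * t2); split; [exact: inOKM | exact: (notP_M hP) |].
move=> y /I_split; apply: (@SP_ind (I k1) (I k2)
  (fun y => exists g, inOK g /\ t1 * t2 * y = M%:R * g)).
- by exists 0; split; [apply: inOK0 | rewrite !mulr0].
- move=> x z [g [hg e]] [g' [hg' e']]; exists (g + g'); split; first exact: inOKD.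
  by rewrite mulrDr e e' mulrDr.
- move=> a b ha hb.
  have [g1 [hg1 e1]] := H1 a ha; have [g2 [hg2 e2]] := H2 b hb.
  exists (g1 * g2); split; first exact: inOKM.
  have -> : t1 * t2 * (a * b) = (t1 * a) * (t2 * b) by ring.
  have -> : (M%:R : algC) = p%:R * (M %/ p)%:R by rewrite -natrM -hMp.
  by rewrite e1 e2; ring.
Qed.

Lemma int_key_z (z : int) : z != 0 -> exists k t, [/\ inOK t, ~ P t &
  forall y, I k y -> exists g, inOK g /\ t * y = z%:~R * g].
Proof.
move=> z0; have [k [t [ht nt H]]] := @int_key `|z|%N (ltac:(by rewrite absz_gt0)).
exists k, t; split => // y /H [g [hg ->]].
exists ((-1) ^+ (z < 0)%R * g); split.
  by apply: inOKM => //; apply: inOKX; apply/inOKN/inOK1.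
rewrite {2}(intEsign z) intrM mulrA; congr (_ * _).
rewrite rmorphXn /= rmorphN1; case: (z < 0)%R => /=.
  by rewrite expr1 mulN1r mulrN1 opprK.
by rewrite expr0 mul1r mulr1.
Qed.

Definition frac_rep (c : algC) := exists a b g0 (z : int),
  [/\ inOK a, inOK b, inOK g0, z != 0 & a * g0 = z%:~R /\ c = b / a].

Lemma fin_scale c : frac_rep c -> forall n, exists n', forall x,
  vP_ge alpha P n' x -> vP_ge alpha P n (c * x).
Proof.
move=> [a [b [g0 [z [ha hb hg0 z0 [e0 ec]]]]]] n.
have a0 : a != 0 by apply: contra_neq z0 => a0; move: e0; rewrite a0 mul0r => /eqP; rewrite eq_sym intr_eq0 => /eqP.
have [k [t [ht nt H]]] := int_key_z z0.
exists (k + n)%N => x [s [hs ns hx]].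
exists (t * s); split; [exact: inOKM | exact: (notP_M hP) |].
have -> : t * s * (c * x) = t * c * (s * x) by ring.
move/I_split: hx; apply: (@SP_ind (I k) (I n) (fun w => I n (t * c * w))).
- by rewrite mulr0; apply: I_0.
- by move=> u v hu hv; rewrite mulrDr; apply: I_D.
move=> u v hu hv; have [g [hg e]] := H u hu.
have -> : t * c * (u * v) = c * (t * u) * v by ring.
rewrite e ec -e0.
have -> : b / a * (a * g0 * g) * v = (b * g0 * g) * v.
  by field.
by apply: (I_M hP) => //; do 2 apply: inOKM => //.
Qed.

End Key.

Section AlphaFacts.
Variable alpha : algC.
Hypothesis a0 : alpha != 0.
Local Notation inK := (inK alpha).
Local Notation inOK := (inOK alpha).
Local Notation pQtoC := (map_poly (ratr : rat -> algC)).

Lemma minpoly_facts : exists (m : {poly rat}) (n : nat),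
  [/\ size m = n.+2, m`_n.+1 = 1, m`_0 != 0 &
      \sum_(i < n.+2) ratr m`_i * alpha ^+ i = 0].
Proof.
have [m [Dm mon_m] dv] := minCpolyP alpha.
have hs : (1 < size m)%N by rewrite -(size_map_poly (ratr : {rmorphism rat -> algC})) -Dm size_minCpoly.
exists m, (size m).-2.
have sz : size m = (size m).-2.+2 by rewrite -subn2 -addn2 subnK.
have root0 : \sum_(i < (size m).-2.+2) ratr m`_i * alpha ^+ i = 0.
  have h : (pQtoC m).[alpha] = 0 by apply/rootP; rewrite dv dvdpp.
  rewrite horner_coef size_map_poly in h; apply: (etrans _ h); rewrite -sz.
  by apply: eq_bigr => i _; rewrite coef_map.
have lc : m`_(size m).-2.+1 = 1.
  by move/monicP: mon_m; rewrite lead_coefE {1}sz.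
split => //.
apply/negP => /eqP m00.
pose h := \poly_(i < (size m).-2.+1) m`_i.+1.
have hA : (pQtoC h).[alpha] = 0.
  move: root0; rewrite big_ord_recl /= m00 rmorph0 mul0r add0r.
  rewrite horner_coef size_map_poly.
  have shz : size h = (size m).-2.+1 by rewrite size_poly_eq //= lc oner_neq0.
  rewrite shz => e.
  have : alpha * \sum_(i < (size m).-2.+1) (pQtoC h)`_i * alpha ^+ i = 0.
    apply: (etrans _ e); rewrite mulr_sumr; apply: eq_bigr => i _.
    by rewrite coef_map coef_poly ltn_ord /= exprS /bump /=; ring.
  by move/eqP; rewrite mulf_eq0 (negbTE a0) /= => /eqP.
have : m %| h by rewrite -dv; apply/rootP.
move/dvdp_leq; rewrite size_poly_eq /=; last by rewrite lc oner_neq0.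
rewrite sz ltnn => H; suff : h != 0 by move/H.
rewrite -size_poly_eq0 size_poly_eq //=; change (m`_(size m).-2.+1 != 0); by rewrite lc oner_neq0.
Qed.

End AlphaFacts.

Section AlphaFacts2.
Variable alpha : algC.
Hypothesis a0 : alpha != 0.
Local Notation inK := (inK alpha).
Local Notation inOK := (inOK alpha).

Lemma inK_inv : inK alpha^-1.
Proof.
have [m [n [sz lc m0 hr]]] := minpoly_facts a0.
rewrite big_ord_recl /= expr0 mulr1 in hr.
pose S := \sum_(i < n.+1) ratr m`_i.+1 * alpha ^+ i.
have e : ratr m`_0 + alpha * S = 0.
  rewrite -[RHS]hr; congr (_ + _); rewrite /S mulr_sumr; apply: eq_bigr => i _.
  by rewrite /bump /= exprS; ring.
have m0C : (ratr m`_0 : algC) != 0 by rewrite fmorph_eq0.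
have -> : alpha^-1 = - S * ratr (m`_0)^-1.
  have aS : alpha * S = - ratr m`_0 by apply/eqP; rewrite -addr_eq0 addrC e.
  apply: (mulfI a0); rewrite mulfV // fmorphV mulrA mulrN aS opprK mulfV //.
apply: inKM; last exact: inK_rat.
apply: inKN; apply: inK_sum => i; apply: inKM; [exact: inK_rat | apply: inKX; exact: inK_alpha].
Qed.

End AlphaFacts2.

Section AlphaFacts3.
Variable alpha : algC.
Hypothesis a0 : alpha != 0.
Local Notation inK := (inK alpha).
Local Notation inOK := (inOK alpha).

Lemma alpha_reps : frac_rep alpha alpha /\ frac_rep alpha alpha^-1.
Proof.
have [m [n [sz lc m0 hr]]] := minpoly_facts a0.
pose Nz : int := \prod_(i < n.+2) denq m`_i.
have Nz0 : Nz != 0 by apply/prodf_neq0 => i _; apply: denq_neq0.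
have rint : forall i, (m`_i * Nz%:~R) \is a Num.int.
  move=> i; case: (ltnP i n.+2) => hi; last by rewrite nth_default ?mul0r ?rpred0 // sz.
  rewrite /Nz (bigD1 (Ordinal hi)) //= rmorphM mulrA -numqE.
  by rewrite rpredM ?intr_int.
pose N : algC := Nz%:~R.
have N0 : N != 0 by rewrite intr_eq0.
pose beta := N * alpha.
pose E i := ratr m`_i * N ^+ (n.+1 - i).
have Eint : forall i, E i \is a Num.int.
  move=> i; rewrite /E; case: (ltnP i n.+1) => hi.
    rewrite subSn // exprS mulrA; apply: rpredM; last by apply: rpredX; apply: intr_int.
    by rewrite /N -(rmorph_int (ratr : {rmorphism rat -> algC})) -rmorphM Cint_rat.
  case: (ltnP i n.+2) => hi2.
    have -> : i = n.+1 by apply/eqP; rewrite eqn_leq hi andbT -ltnS.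
    by rewrite lc subnn expr0 rmorph1 mulr1 rpred1.
  by rewrite nth_default ?rmorph0 ?mul0r ?rpred0 // sz.
have hsum : \sum_(i < n.+2) E i * beta ^+ i = 0.
  have -> : \sum_(i < n.+2) E i * beta ^+ i = N ^+ n.+1 * \sum_(i < n.+2) ratr m`_i * alpha ^+ i.
    rewrite mulr_sumr; apply: eq_bigr => i _; rewrite /E /beta exprMn.
    have -> : N ^+ n.+1 = N ^+ (n.+1 - i) * N ^+ i by rewrite -exprD subnK // -ltnS.
    ring.
  by rewrite hr mulr0.
have betaA : beta \in Aint.
  apply: (@root_monic_Aint (\poly_(i < n.+2) E i)).
  - by apply/rootP; rewrite horner_poly.
  - have En : E n.+1 = 1 by rewrite /E lc subnn expr0 rmorph1 mulr1.
    have szp : size (\poly_(i < n.+2) E i) = n.+2 by rewrite size_poly_eq //= En oner_neq0.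
    by rewrite monicE lead_coefE szp coef_poly ltnSn En.
  - apply/polyOverP => i; rewrite coef_poly; case: (i < n.+2)%N => //; exact: rpred0.
have betaK : inK beta by apply: inKM; [apply: inK_int | apply: inK_alpha].
have betaOK : inOK beta by split.
have [z ez] : exists z : int, E 0 = z%:~R by apply/intrP.
have z0 : z != 0.
  rewrite -(intr_eq0 algC) -ez /E mulf_eq0 negb_or fmorph_eq0 m0 /=.
  by rewrite expf_neq0.
pose g0 := - \sum_(i < n.+1) E i.+1 * beta ^+ i.
have hg0 : beta * g0 = z%:~R.
  rewrite -ez; move: hsum; rewrite big_ord_recl expr0 mulr1 /g0 => e.
  have : beta * (\sum_(i < n.+1) E i.+1 * beta ^+ i) = \sum_(i < n.+1) E (bump 0 i) * beta ^+ bump 0 i.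
    by rewrite mulr_sumr; apply: eq_bigr => i _; rewrite /bump /= exprS; ring.
  move=> e2; rewrite mulrN e2; apply/eqP; rewrite eq_sym -addr_eq0; apply/eqP; exact: e.
have g0OK : inOK g0.
  split.
    apply: inKN; apply: inK_sum => i; apply: inKM; last exact: inKX.
    by apply: inKM; [apply: inK_rat | apply: inKX; apply: inK_int].
  by rewrite rpredN; apply: rpred_sum => i _; apply: rpredM; [apply: Aint_Cint | apply: rpredX].
split.
  exists N, beta, 1, Nz; split => //; first exact: inOK_int.
    exact: inOK1.
  by split; [rewrite mulr1 | rewrite /beta mulrAC mulfV // mul1r].
exists beta, N, g0, z; split => //; first exact: inOK_int.
by split => //; rewrite /beta invfM mulrA mulfV // mul1r.
Qed.

End AlphaFacts3.

Section Places.
Variable alpha : algC.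
Local Notation inK := (inK alpha).
Local Notation small := (small alpha).
Local Notation pQtoC := (map_poly (ratr : rat -> algC)).

Lemma inv_le (m n : nat) : (m <= n)%N -> ((n.+1)%:R^-1 : algC) <= (m.+1)%:R^-1.
Proof.
move=> h; rewrite lef_pV2 ?ler_nat ?ltnS // ?posrE ?ltr0n //.
Qed.

Lemma small_0 v n : in_S alpha v -> small v n 0.
Proof.
case: v => [b|Q]; rewrite /small /= => hv.
  by exists 0; rewrite !rmorph0 !horner0 normr0 invr_gt0 ltr0n.
by apply: vP0; case: hv.
Qed.

Lemma small_le v m n x : in_S alpha v -> (m <= n)%N -> small v n x -> small v m x.
Proof.
case: v => [b|Q]; rewrite /small /= => hv h.
  move=> [q [-> hq]]; exists q; split => //; apply: (lt_le_trans hq); exact: inv_le.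
move=> H; exact: (@vP_le alpha Q (proj1 hv) m n x h H).
Qed.

Lemma small_N v n x : in_S alpha v -> small v n x -> small v n (- x).
Proof.
case: v => [b|Q]; rewrite /small /= => hv.
  by move=> [q [-> hq]]; exists (- q); rewrite !rmorphN !hornerN normrN.
move=> H; exact: (@vPN alpha Q (proj1 hv) n x H).
Qed.

Lemma small_D v n : in_S alpha v -> exists n', forall x y,
  small v n' x -> small v n' y -> small v n (x + y).
Proof.
case: v => [b|Q]; rewrite /small /= => hv; last by exists n => x y; apply: (@vPD alpha Q (proj1 hv) n).
exists (n.*2.+1) => x y [q [-> hq]] [r [-> hr]].
exists (q + r); rewrite rmorphD !hornerD; split => //.
apply: (le_lt_trans (ler_normD _ _)).
apply: (lt_le_trans (ltrD hq hr)).
have eX : ((n.*2.+1.+1)%:R : algC) = (n.+1)%:R * 2 by rewrite -natrM muln2 doubleS.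
rewrite eX le_eqVlt; apply/orP; left; apply/eqP.
have h2 : (2 : algC) != 0 by rewrite pnatr_eq0.
have hn : ((n.+1)%:R : algC) != 0 by rewrite pnatr_eq0.
by field; rewrite addrC natr1.
Qed.

Lemma small_scale_inf b c : inK c -> forall n, exists n', forall x,
  small (Inf b) n' x -> small (Inf b) n (c * x).
Proof.
move=> [r ->] n.
set A := `|(pQtoC r).[b]|.
pose B := Num.Def.archi_bound A.
have hB : A < B%:R by apply: archi_boundP; apply: normr_ge0.
have B0 : (0 < B)%N by rewrite -(ltr_nat algC); apply: le_lt_trans hB; apply: normr_ge0.
exists (B * n.+1).-1 => x [q [-> hq]].
exists (r * q); split; first by rewrite rmorphM hornerM.
rewrite rmorphM hornerM normrM.
have e : ((B * n.+1).-1.+1 : nat) = (B * n.+1)%N by rewrite prednK // muln_gt0 B0.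
rewrite e in hq.
apply: (le_lt_trans (ler_wpM2r (normr_ge0 _) (ltW hB))).
have -> : ((n.+1)%:R^-1 : algC) = B%:R * ((B * n.+1)%N%:R)^-1.
  rewrite natrM invfM mulrA mulfV ?mul1r //.
  by rewrite pnatr_eq0 -lt0n.
by rewrite ltr_pM2l // ltr0n.
Qed.

Lemma small_scale v c : in_S alpha v -> inK c -> frac_rep alpha c ->
  forall n, exists n', forall x, small v n' x -> small v n (c * x).
Proof.
case: v => [b|Q]; rewrite /small /= => hv hc hf.
  exact: small_scale_inf.
exact: (@fin_scale alpha Q (proj1 hv) c hf).
Qed.

End Places.

Lemma shift_id (a x : algC) (d : nat -> algC) m : a != 0 ->
  a * (x + \sum_(1 <= k < m.+2) d k * a ^- k) =
  a * x + d 1%N + \sum_(1 <= k < m.+1) d k.+1 * a ^- k.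
Proof.
move=> a0; rewrite big_nat_recl // mulrDr mulrDr addrA expr1.
congr (_ + _ + _); first by rewrite mulrCA mulfV ?mulr1.
rewrite mulr_sumr; apply: eq_bigr => k _.
have ak : a ^+ k != 0 by apply: expf_neq0.
rewrite exprS invfM; field.
by rewrite ak a0.
Qed.

Section Zalpha.
Variable alpha : algC.
Local Notation inZ := (inZalpha alpha).
Lemma inZD x y : inZ x -> inZ y -> inZ (x + y).
Proof. by move=> [p ->] [q ->]; exists (p + q); rewrite rmorphD hornerD. Qed.
Lemma inZM x y : inZ x -> inZ y -> inZ (x * y).
Proof. by move=> [p ->] [q ->]; exists (p * q); rewrite rmorphM hornerM. Qed.
Lemma inZ_alpha : inZ alpha.
Proof. by exists 'X; rewrite map_polyX hornerX. Qed.
End Zalpha.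
Unset Implicit Arguments.

Theorem proposition6p5 (alpha : algC) (D : algC -> Prop) :
  expanding alpha -> standard_digits alpha D ->
  forall x, inZalpha alpha x ->
  forall z : Kpoint, is_point alpha z ->
    (in_G alpha D x z <->
     exists y, T_alpha alpha D y x /\
       exists w : Kpoint, [/\ is_point alpha w, in_G alpha D y w &
                              peq alpha z (pscale alpha^-1 w)]).
Proof.
move=> hexp hstd x hx z hz.
have a0 : alpha != 0.
  apply/eqP => e; move: (hexp alpha (root_minCpoly alpha)).
  by rewrite e normr0 ltr10.
have [rA rAi] := alpha_reps a0.
have Hsc : forall v c, in_S alpha v -> (c = alpha \/ c = alpha^-1) ->
    forall n, exists n', forall x, small alpha v n' x -> small alpha v n (c * x).
  move=> v c hv [->|->]; apply: small_scale => //.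
  - exact: inK_alpha.
  - exact: inK_inv.
split.
  move=> [[d [hd hconv]] hfin].
  exists (alpha * x + d 1%N); split.
    split; first by apply: inZD; [apply: inZM => //; apply: inZ_alpha | apply: (proj1 hstd); apply: hd].
    exists (d 1%N).
    have e : alpha^-1 * (alpha * x + d 1%N - d 1%N) = x by rewrite addrK (mulKf a0).
    by rewrite e; split.
  exists (pscale alpha z); split.
  - move=> v hv; have [hK hC] := hz v hv; split => [i|n].
      by rewrite /pscale; apply: inKM; [exact: inK_alpha | exact: hK].
    have [n' hn'] := Hsc v alpha hv (or_introl erefl) n.
    have [N hN] := hC n'; exists N => i j hi hj; rewrite /pscale -mulrBr.
    by apply: hn'; apply: hN.
  - split.
      exists (fun k => d k.+1); split => [k|v hv n]; first exact: hd.
      have [n' hn'] := Hsc v alpha hv (or_introl erefl) n.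
      have [N hN] := hconv v hv n'.
      exists N => m hm; have [M hM] := hN m.+1 (leqW hm); exists M => i hi.
      rewrite /pscale -(shift_id x d m a0) -mulrBr; apply: hn'; exact: hM.
    move=> P hP n; have [n' hn'] := Hsc (Fin P) alpha hP (or_introl erefl) n.
    have [N hN] := hfin P hP n'; exists N => i hi; rewrite /pscale.
    by have := hn' _ (hN i hi); rewrite !subr0.
  - move=> v hv n; exists 0%N => i _; rewrite /pscale /=.
    have -> : alpha^-1 * (alpha * z v i) = z v i by rewrite (mulKf a0).
    rewrite subrr.
    exact: small_0.
move=> [y [[hy [d0 [hd0 hyd0 ex]]] [w [hw [[d' [hd' hconv']] hfin'] hpeq]]]].
pose e k := if k == 1%N then d0 else d' k.-1.
have hax : alpha * x = y - d0 by rewrite ex (mulVKf a0).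
have hid : forall m, x + \sum_(1 <= k < m.+2) e k * alpha ^- k =
    alpha^-1 * (y + \sum_(1 <= k < m.+1) d' k * alpha ^- k).
  move=> m; apply: (mulfI a0); rewrite shift_id // (mulVKf a0) hax /e /=.
  have -> : \sum_(1 <= k < m.+1) (if k.+1 == 1%N then d0 else d' k.+1.-1) * alpha ^- k =
            \sum_(1 <= k < m.+1) d' k * alpha ^- k.
    by apply: eq_big_nat => k /andP [hk _]; case: k hk.
  by rewrite subrK.
split.
  exists e; split => [k|v hv n].
    by rewrite /e; case: (k == 1%N).
  have [n1 hn1] := small_D n hv.
  have [n2 hn2] := Hsc v alpha^-1 hv (or_intror erefl) n1.
  have [N hN] := hconv' v hv n2.
  have [M2 hM2] := hpeq v hv n1.
  exists N.+1 => m; case: m => [//|m] hm.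
  have [M1 hM1] := hN m hm.
  exists (maxn M1 M2) => i hi.
  have -> : x + \sum_(1 <= k < m.+2) e k * alpha ^- k - z v i =
      alpha^-1 * (y + \sum_(1 <= k < m.+1) d' k * alpha ^- k - w v i) +
      - (z v i - pscale alpha^-1 w v i).
    by rewrite hid /pscale; ring.
  apply: hn1.
    by apply: hn2; apply: hM1; apply: leq_trans hi; apply: leq_maxl.
  by apply: small_N => //; apply: hM2; apply: leq_trans hi; apply: leq_maxr.
move=> P hP n.
have [n1 hn1] := small_D n hP.
have [n2 hn2] := Hsc (Fin P) alpha^-1 hP (or_intror erefl) n1.
have [N1 hN1] := hfin' P hP n2.
have [N2 hN2] := hpeq (Fin P) hP n1.
exists (maxn N1 N2) => i hi.
have -> : z (Fin P) i - 0 = (z (Fin P) i - pscale alpha^-1 w (Fin P) i) +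
    alpha^-1 * (w (Fin P) i - 0) by rewrite /pscale; ring.
apply: hn1.
  by apply: hN2; apply: leq_trans hi; apply: leq_maxr.
by apply: hn2; apply: hN1; apply: leq_trans hi; apply: leq_maxl.
Qed.
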